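(* Let $G$ be a non-amenable group and $m\in\mathbb{N}$. (i) If every $m$-generated subgroup of $G$ is amenable, then $\mathcal{T}(G)\geq m+3$. (ii) If every $m$-generated subgroup of $G$ is finite, then $\mathcal{T}(G)\geq 2m+4$.
   Context: A group $G$ admits a paradoxical decomposition if there exist positive integers $m,n$, pairwise disjoint subsets $P_1,\ldots,P_m,Q_1,\ldots,Q_n$ of $G$ and elements $g_1,\ldots,g_m,h_1,\ldots,h_n\in G$ with $G=\bigcup_iP_ig_i=\bigcup_jQ_jh_j$; this happens iff $G$ is non-amenable. The Tarski number $\mathcal{T}(G)$ is the minimal value of $m+n$. *)

(* Defs.v *)
From Stdlib Require Import Reals List.
Open Scope R_scope.

Record Group := {
  gcar :> Type;
  gmul : gcar -> gcar -> gcar;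
  gone : gcar;
  ginv : gcar -> gcar;
  gmulA : forall x y z, gmul x (gmul y z) = gmul (gmul x y) z;
  gmul1 : forall x, gmul gone x = x;
  gmulV : forall x, gmul (ginv x) x = gone
}.

Section Defs.
Variable G : Group.

Definition is_subgroup (H : G -> Prop) : Prop :=
  H (gone G) /\ (forall x y, H x -> H y -> H (gmul G x y)) /\
  (forall x, H x -> H (ginv G x)).

Definition generated (s : list G) : G -> Prop :=
  fun x => forall K : G -> Prop, is_subgroup K -> (forall a, In a s -> K a) -> K x.

(* H is an m-generated subgroup: generated by (at most) m elements
   (a list of length m, repetitions allowed) *)
Definition m_generated_subgroup (m : nat) (H : G -> Prop) : Prop :=
  exists s : list G, length s = m /\ forall x, H x <-> generated s x.

Definition amenable_subgroup (H : G -> Prop) : Prop :=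
  exists mu : (G -> Prop) -> R,
    (forall A, (forall x, A x -> H x) -> 0 <= mu A) /\
    mu H = 1 /\
    (forall A B, (forall x, A x -> H x) -> (forall x, B x -> H x) ->
       (forall x, A x -> B x -> False) ->
       mu (fun x => A x \/ B x) = mu A + mu B) /\
    (forall h A, H h -> (forall x, A x -> H x) ->
       mu (fun x => A (gmul G (ginv G h) x)) = mu A).

Definition amenable : Prop := amenable_subgroup (fun _ => True).

Definition finite_set (H : G -> Prop) : Prop :=
  exists l : list G, forall x, H x -> In x l.

Definition rtrans (P : G -> Prop) (g : G) : G -> Prop :=
  fun y => exists x, P x /\ y = gmul G x g.

Definition paradoxical (p q : nat) : Prop :=
  (1 <= p)%nat /\ (1 <= q)%nat /\
  exists (P Q : nat -> G -> Prop) (g h : nat -> G),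
    (forall i j x, (i < p)%nat -> (j < p)%nat -> i <> j -> P i x -> P j x -> False) /\
    (forall i j x, (i < q)%nat -> (j < q)%nat -> i <> j -> Q i x -> Q j x -> False) /\
    (forall i j x, (i < p)%nat -> (j < q)%nat -> P i x -> Q j x -> False) /\
    (forall y, exists i, (i < p)%nat /\ rtrans (P i) (g i) y) /\
    (forall y, exists j, (j < q)%nat /\ rtrans (Q j) (h j) y).

Definition is_tarski_number (t : nat) : Prop :=
  (exists p q, paradoxical p q /\ (p + q)%nat = t) /\
  (forall p q, paradoxical p q -> (t <= p + q)%nat).

End Defs.

(* Main.v *)
Require Import Defs.
From Stdlib Require Import Reals List Arith Lia Lra ClassicalEpsilon FunctionalExtensionality PropExtensionality Classical.

Lemma gmulVr {G : Group} (x : G) : gmul G x (ginv G x) = gone G.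
Proof.
  assert (Hy : gmul G (gmul G x (ginv G x)) (gmul G x (ginv G x)) = gmul G x (ginv G x)).
  { rewrite <- gmulA, (gmulA G (ginv G x)), gmulV, gmul1. reflexivity. }
  rewrite <- (gmul1 G (gmul G x (ginv G x))) at 1.
  rewrite <- (gmulV G (gmul G x (ginv G x))), <- gmulA, Hy. reflexivity.
Qed.

Lemma gmul1r {G : Group} (x : G) : gmul G x (gone G) = x.
Proof. rewrite <- (gmulV G x), gmulA, gmulVr, gmul1. reflexivity. Qed.

Lemma gcancel {G : Group} (a b c : G) : gmul G a b = gmul G a c -> b = c.
Proof.
  intro H. rewrite <- (gmul1 G b), <- (gmul1 G c), <- (gmulV G a), <- !gmulA, H. reflexivity.
Qed.

Lemma ginvK {G : Group} (x : G) : ginv G (ginv G x) = x.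
Proof. apply (gcancel (ginv G x)). rewrite gmulVr, gmulV. reflexivity. Qed.

Lemma ginvM {G : Group} (x y : G) : ginv G (gmul G x y) = gmul G (ginv G y) (ginv G x).
Proof.
  apply (gcancel (gmul G x y)). rewrite gmulVr, <- gmulA, (gmulA G y), gmulVr, gmul1, gmulVr. reflexivity.
Qed.

Lemma gen_sub {G : Group} (s : list G) : is_subgroup G (generated G s).
Proof.
  unfold is_subgroup, generated; split; [|split].
  - intros K [H1 _] _. exact H1.
  - intros x y Hx Hy K HK Hs. apply (proj1 (proj2 HK)); [exact (Hx K HK Hs)|exact (Hy K HK Hs)].
  - intros x Hx K HK Hs. apply (proj2 (proj2 HK)); exact (Hx K HK Hs).
Qed.

Lemma gen_in {G : Group} (s : list G) a : In a s -> generated G s a.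
Proof. intros Ha K _ Hs. auto. Qed.


Fixpoint fsum (n : nat) (f : nat -> R) : R :=
  match n with O => 0 | S k => fsum k f + f k end.

Lemma fsum_ext n f g : (forall i, (i < n)%nat -> f i = g i) -> fsum n f = fsum n g.
Proof. induction n; intros E; simpl; auto. rewrite IHn, E; auto. Qed.

Lemma fsum_split p q f : fsum (p + q) f = fsum p f + fsum q (fun j => f (p + j)%nat).
Proof. induction q; simpl. rewrite Nat.add_0_r. lra. rewrite Nat.add_succ_r. simpl. rewrite IHq. lra. Qed.

Definition Un {T : Type} (n : nat) (A : nat -> T -> Prop) : T -> Prop :=
  fun x => exists i, (i < n)%nat /\ A i x.

Lemma pext {T : Type} (nu : (T -> Prop) -> R) (A B : T -> Prop) :
  (forall x, A x <-> B x) -> nu A = nu B.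
Proof. intro E. f_equal. apply functional_extensionality. intro x. apply propositional_extensionality, E. Qed.

Lemma Nmono {T : Type} (H : T -> Prop) (nu : (T -> Prop) -> R)
  (N0 : forall A, (forall x, A x -> H x) -> 0 <= nu A)
  (Nadd : forall A B, (forall x, A x -> H x) -> (forall x, B x -> H x) ->
       (forall x, A x -> B x -> False) ->
       nu (fun x => A x \/ B x) = nu A + nu B) A B : (forall x, B x -> H x) -> (forall x, A x -> B x) -> nu A <= nu B.
Proof.
  intros HB AB.
  rewrite (pext nu B (fun x => A x \/ (B x /\ ~ A x))).
  - assert (0 <= nu (fun x => B x /\ ~ A x)) by (apply N0; firstorder).
    rewrite Nadd; [lra|firstorder|firstorder|firstorder].
  - intro x. split; [|firstorder]. intro Bx. destruct (classic (A x)); auto.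
Qed.

Lemma Nsub {T : Type} (H : T -> Prop) (nu : (T -> Prop) -> R)
  (N0 : forall A, (forall x, A x -> H x) -> 0 <= nu A)
  (Nadd : forall A B, (forall x, A x -> H x) -> (forall x, B x -> H x) ->
       (forall x, A x -> B x -> False) ->
       nu (fun x => A x \/ B x) = nu A + nu B) A B : (forall x, A x -> H x) -> (forall x, B x -> H x) ->
  nu (fun x => A x \/ B x) <= nu A + nu B.
Proof.
  intros HA HB.
  rewrite (pext nu (fun x => A x \/ B x) (fun x => A x \/ (B x /\ ~ A x))).
  - assert (nu (fun x => B x /\ ~ A x) <= nu B) by (apply (Nmono H nu N0 Nadd); firstorder).
    rewrite Nadd; [lra|firstorder|firstorder|firstorder].
  - intro x. split; [|firstorder]. intros [a|b]; auto. destruct (classic (A x)); auto.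
Qed.

Lemma Nempty {T : Type} (H : T -> Prop) (nu : (T -> Prop) -> R)
  (N0 : forall A, (forall x, A x -> H x) -> 0 <= nu A)
  (Nadd : forall A B, (forall x, A x -> H x) -> (forall x, B x -> H x) ->
       (forall x, A x -> B x -> False) ->
       nu (fun x => A x \/ B x) = nu A + nu B) : nu (fun _ => False) = 0.
Proof.
  assert (E : nu (fun x => False \/ False) = nu (fun _ => False) + nu (fun _ => False))
    by (apply Nadd; tauto).
  rewrite (pext nu (fun x => False \/ False) (fun _ => False)) in E by tauto. lra.
Qed.

Lemma Nunion_le {T : Type} (H : T -> Prop) (nu : (T -> Prop) -> R)
  (N0 : forall A, (forall x, A x -> H x) -> 0 <= nu A)
  (Nadd : forall A B, (forall x, A x -> H x) -> (forall x, B x -> H x) ->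
       (forall x, A x -> B x -> False) ->
       nu (fun x => A x \/ B x) = nu A + nu B) n A : (forall i, (i < n)%nat -> forall x, A i x -> H x) ->
  nu (Un n A) <= fsum n (fun i => nu (A i)).
Proof.
  induction n; intro HA; simpl.
  - rewrite (pext nu (Un 0 A) (fun _ => False)). rewrite (Nempty H nu N0 Nadd); lra.
    intro x. split; [intros [i [Hi _]]; lia | tauto].
  - rewrite (pext nu (Un (S n) A) (fun x => Un n A x \/ A n x)).
    + eapply Rle_trans. apply (Nsub H nu N0 Nadd).
      * intros x [i [Hi Ax]]. apply (HA i); auto.
      * apply HA; auto.
      * assert (nu (Un n A) <= fsum n (fun i => nu (A i))) by (apply IHn; intros i Hi; apply HA; lia). lra.
    + intro x. split.
      * intros [i [Hi Ax]]. destruct (Nat.eq_dec i n) as [->|]; auto. left. exists i. split; auto; lia.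
      * intros [[i [Hi Ax]]|Ax]; [exists i; split; auto | exists n; split; auto].
Qed.

Lemma Nunion_eq {T : Type} (H : T -> Prop) (nu : (T -> Prop) -> R)
  (N0 : forall A, (forall x, A x -> H x) -> 0 <= nu A)
  (Nadd : forall A B, (forall x, A x -> H x) -> (forall x, B x -> H x) ->
       (forall x, A x -> B x -> False) ->
       nu (fun x => A x \/ B x) = nu A + nu B) n A : (forall i, (i < n)%nat -> forall x, A i x -> H x) ->
  (forall i j x, (i < n)%nat -> (j < n)%nat -> i <> j -> A i x -> A j x -> False) ->
  nu (Un n A) = fsum n (fun i => nu (A i)).
Proof.
  induction n; intros HA HD; simpl.
  - rewrite (pext nu (Un 0 A) (fun _ => False)). rewrite (Nempty H nu N0 Nadd); lra.
    intro x. split; [intros [i [Hi _]]; lia | tauto].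
  - rewrite (pext nu (Un (S n) A) (fun x => Un n A x \/ A n x)).
    + rewrite Nadd.
      * rewrite IHn; [reflexivity| intros i Hi; apply HA; lia | intros i j x Hi Hj; apply HD; lia].
      * intros x [i [Hi Ax]]. apply (HA i); auto.
      * apply HA; auto.
      * intros x [i [Hi Ax]] Anx. apply (HD i n x); auto; lia.
    + intro x. split.
      * intros [i [Hi Ax]]. destruct (Nat.eq_dec i n) as [->|]; auto. left. exists i. split; auto; lia.
      * intros [[i [Hi Ax]]|Ax]; [exists i; split; auto | exists n; split; auto].
Qed.

Lemma side_finite {G : Group} (p : nat) (P : nat -> G -> Prop) (g : nat -> G)
  (F : G -> Prop) (L : list G) (x0 : G) :
  is_subgroup G F -> (forall x, F x -> In x L) -> (forall i, (i < p)%nat -> F (g i)) ->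
  (forall i j x, (i < p)%nat -> (j < p)%nat -> i <> j -> P i x -> P j x -> False) ->
  (forall y, exists i, (i < p)%nat /\ rtrans G (P i) (g i) y) ->
  (forall i, (i < p)%nat -> ~ P i x0) -> False.
Proof.
  intros [F1 [FM FI]] HL Hg Hdisj Hcov Hx0.
  assert (ch : forall y, {pr : nat * G | (fst pr < p)%nat /\ P (fst pr) (snd pr) /\ y = gmul G (snd pr) (g (fst pr))}).
  { intro y. apply constructive_indefinite_description.
    destruct (Hcov y) as [i [Hi [x [Hx Hy]]]]. exists (i, x). simpl. auto. }
  set (xf := fun y => snd (proj1_sig (ch y))).
  assert (Hxf : forall y, exists i, (i < p)%nat /\ P i (xf y) /\ y = gmul G (xf y) (g i)).
  { intro y. unfold xf. destruct (ch y) as [[i x] [H1 [H2 H3]]]. simpl in *. exists i. auto. }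
  assert (Hinj : forall y y', xf y = xf y' -> y = y').
  { intros y y' E. destruct (Hxf y) as [i [Hi [Pi Ey]]]. destruct (Hxf y') as [j [Hj [Pj Ey']]].
    rewrite <- E in Pj. destruct (Nat.eq_dec i j) as [->|Hne].
    - rewrite Ey, Ey', E. reflexivity.
    - exfalso. exact (Hdisj i j _ Hi Hj Hne Pi Pj). }
  set (S := fun z => exists f, F f /\ z = gmul G x0 f).
  assert (HS : forall y, S y -> S (xf y)).
  { intros y [f [Hf Ey]]. destruct (Hxf y) as [i [Hi [Pi Ey']]].
    exists (gmul G f (ginv G (g i))). split.
    - apply FM; auto.
    - assert (E2 : xf y = gmul G y (ginv G (g i))).
      { rewrite Ey' at 2. rewrite <- gmulA, gmulVr, gmul1r. reflexivity. }
      rewrite E2, Ey, gmulA. reflexivity. }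
  assert (eqdec : forall a b : G, {a = b} + {a <> b}).
  { intros a b. apply excluded_middle_informative. }
  set (D := nodup eqdec (filter (fun z => if excluded_middle_informative (S z) then true else false) (map (gmul G x0) L))).
  assert (HD : forall z, In z D <-> S z).
  { intro z. unfold D. rewrite nodup_In, filter_In, in_map_iff. split.
    - intros [_ H]. destruct (excluded_middle_informative (S z)); [auto|discriminate].
    - intros Hz. split.
      + destruct Hz as [f [Hf Ez]]. exists f. auto.
      + destruct (excluded_middle_informative (S z)); [auto|contradiction]. }
  assert (ND : NoDup (x0 :: map xf D)).
  { constructor.
    - rewrite in_map_iff. intros [y [Ey _]]. destruct (Hxf y) as [i [Hi [Pi _]]].
      rewrite Ey in Pi. exact (Hx0 i Hi Pi).
    - apply NoDup_map_NoDup_ForallPairs.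
      + intros a b _ _. apply Hinj.
      + apply NoDup_nodup. }
  assert (INC : incl (x0 :: map xf D) D).
  { intros z [<-|Hz].
    - apply HD. exists (gone G). split; auto. rewrite gmul1r. reflexivity.
    - rewrite in_map_iff in Hz. destruct Hz as [y [<- Hy]]. apply HD, HS, HD, Hy. }
  pose proof (NoDup_incl_length ND INC) as Hlen. simpl in Hlen. rewrite length_map in Hlen. lia.
Qed.


Lemma amen_contra {G : Group} (H : G -> Prop) (p q : nat) (P Q : nat -> G -> Prop) (g h : nat -> G) :
  is_subgroup G H -> amenable_subgroup G H ->
  (forall i, (i < p)%nat -> H (g i)) -> (forall j, (j < q)%nat -> H (h j)) ->
  (forall i j x, (i < p)%nat -> (j < p)%nat -> i <> j -> P i x -> P j x -> False) ->
  (forall i j x, (i < q)%nat -> (j < q)%nat -> i <> j -> Q i x -> Q j x -> False) ->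
  (forall i j x, (i < p)%nat -> (j < q)%nat -> P i x -> Q j x -> False) ->
  (forall y, exists i, (i < p)%nat /\ rtrans G (P i) (g i) y) ->
  (forall y, exists j, (j < q)%nat /\ rtrans G (Q j) (h j) y) -> False.
Proof.
  intros [H1 [HM HI]] [mu [M0 [M1 [Madd Minv]]]] Hg Hh DP DQ DPQ CP CQ.
  set (nu := fun A : G -> Prop => mu (fun x => A (ginv G x))).
  assert (N0 : forall A, (forall x, A x -> H x) -> 0 <= nu A).
  { intros A HA. apply M0. intros x Ax. rewrite <- (ginvK x). apply HI, HA, Ax. }
  assert (Nadd : forall A B, (forall x, A x -> H x) -> (forall x, B x -> H x) ->
       (forall x, A x -> B x -> False) -> nu (fun x => A x \/ B x) = nu A + nu B).
  { intros A B HA HB D. unfold nu. apply Madd.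
    - intros x Ax. rewrite <- (ginvK x). apply HI, HA, Ax.
    - intros x Ax. rewrite <- (ginvK x). apply HI, HB, Ax.
    - intros x. apply D. }
  assert (N1 : nu H = 1).
  { unfold nu. rewrite <- M1. apply pext. intro x. split.
    - intro Hx. rewrite <- (ginvK x). apply HI, Hx.
    - apply HI. }
  assert (Ninv : forall A a, H a -> (forall x, A x -> H x) -> nu (rtrans G A a) = nu A).
  { intros A a Ha HA. unfold nu.
    rewrite <- (Minv (ginv G a) (fun x => A (ginv G x))).
    - apply pext. intro x. rewrite ginvK, ginvM. split.
      + intros [y [Ay Ey]]. rewrite Ey, <- gmulA, gmulVr, gmul1r. exact Ay.
      + intro Ay. exists (gmul G (ginv G x) (ginv G a)). split; auto.
        rewrite <- gmulA, gmulV, gmul1r. reflexivity.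
    - apply HI, Ha.
    - intros x Ax. rewrite <- (ginvK x). apply HI, HA, Ax. }
  set (PH := fun i x => P i x /\ H x).
  set (QH := fun i x => Q i x /\ H x).
  assert (SP : 1 <= fsum p (fun i => nu (PH i))).
  { rewrite <- N1.
    rewrite <- (fsum_ext p (fun i => nu (rtrans G (PH i) (g i)))).
    2:{ intros i Hi. apply Ninv; auto. intros x [_ Hx]; exact Hx. }
    eapply Rle_trans.
    - apply (Nmono H nu N0 Nadd H (Un p (fun i => rtrans G (PH i) (g i)))).
      + intros x [i [Hi [y [[_ Hy] Ex]]]]. rewrite Ex. apply HM; auto.
      + intros y Hy. destruct (CP y) as [i [Hi [x [Px Ey]]]]. exists i. split; auto.
        exists x. split; auto. split; auto.
        assert (Ex : x = gmul G y (ginv G (g i))) by (rewrite Ey, <- gmulA, gmulVr, gmul1r; reflexivity).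
        rewrite Ex. apply HM; auto.
    - apply (Nunion_le H nu N0 Nadd).
      intros i Hi x [y [[_ Hy] Ex]]. rewrite Ex. apply HM; auto. }
  assert (SQ : 1 <= fsum q (fun i => nu (QH i))).
  { rewrite <- N1.
    rewrite <- (fsum_ext q (fun i => nu (rtrans G (QH i) (h i)))).
    2:{ intros i Hi. apply Ninv; auto. intros x [_ Hx]; exact Hx. }
    eapply Rle_trans.
    - apply (Nmono H nu N0 Nadd H (Un q (fun i => rtrans G (QH i) (h i)))).
      + intros x [i [Hi [y [[_ Hy] Ex]]]]. rewrite Ex. apply HM; auto.
      + intros y Hy. destruct (CQ y) as [i [Hi [x [Px Ey]]]]. exists i. split; auto.
        exists x. split; auto. split; auto.
        assert (Ex : x = gmul G y (ginv G (h i))) by (rewrite Ey, <- gmulA, gmulVr, gmul1r; reflexivity).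
        rewrite Ex. apply HM; auto.
    - apply (Nunion_le H nu N0 Nadd).
      intros i Hi x [y [[_ Hy] Ex]]. rewrite Ex. apply HM; auto. }
  set (C := fun k => if Nat.ltb k p then PH k else QH (k - p)%nat).
  assert (CH : forall k x, C k x -> H x).
  { intros k x. unfold C. destruct (Nat.ltb k p); intros [_ Hx]; exact Hx. }
  assert (E : nu (Un (p + q) C) = fsum (p + q) (fun k => nu (C k))).
  { apply (Nunion_eq H nu N0 Nadd).
    - intros i _. apply CH.
    - intros i j x Hi Hj Hne. unfold C.
      destruct (Nat.ltb_spec i p); destruct (Nat.ltb_spec j p); intros [A _] [B _].
      + exact (DP i j x H0 H2 Hne A B).
      + exact (DPQ i (j - p)%nat x H0 ltac:(lia) A B).
      + exact (DPQ j (i - p)%nat x H2 ltac:(lia) B A).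
      + apply (DQ (i - p)%nat (j - p)%nat x); auto; lia. }
  assert (LE : nu (Un (p + q) C) <= 1).
  { rewrite <- N1. apply (Nmono H nu N0 Nadd); auto.
    intros x [k [_ Ck]]. exact (CH k x Ck). }
  rewrite E, fsum_split in LE.
  rewrite (fsum_ext p (fun k => nu (C k)) (fun i => nu (PH i))) in LE.
  2:{ intros i Hi. unfold C. destruct (Nat.ltb_spec i p); [reflexivity|lia]. }
  rewrite (fsum_ext q (fun j => nu (C (p + j)%nat)) (fun i => nu (QH i))) in LE.
  2:{ intros i Hi. unfold C. destruct (Nat.ltb_spec (p + i) p); [lia|]. f_equal. f_equal. lia. }
  lra.
Qed.

Lemma norm_cover {G : Group} (p : nat) (P : nat -> G -> Prop) (g : nat -> G) :
  (forall y, exists i, (i < p)%nat /\ rtrans G (P i) (g i) y) ->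
  forall y, exists i, (i < p)%nat /\ rtrans G (P i) (gmul G (g i) (ginv G (g 0%nat))) y.
Proof.
  intros C y. destruct (C (gmul G y (g 0%nat))) as [i [Hi [x [Px Ex]]]].
  exists i. split; auto. exists x. split; auto.
  rewrite gmulA, <- Ex, <- gmulA, gmulVr, gmul1r. reflexivity.
Qed.

Lemma side_bound {G : Group} (m p : nat) (P : nat -> G -> Prop) (g : nat -> G) (x0 : G) :
  (forall H, m_generated_subgroup G m H -> finite_set G H) ->
  (forall i j x, (i < p)%nat -> (j < p)%nat -> i <> j -> P i x -> P j x -> False) ->
  (forall y, exists i, (i < p)%nat /\ rtrans G (P i) (g i) y) ->
  (forall i, (i < p)%nat -> ~ P i x0) -> (m + 2 <= p)%nat.
Proof.
  intros Hm D C Hx0. destruct (le_lt_dec (m + 2) p) as [|Hlt]; auto. exfalso.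
  set (g' := fun i => gmul G (g i) (ginv G (g 0%nat))).
  set (s := map g' (seq 1 m)).
  destruct (Hm (generated G s)) as [L HL].
  { exists s. split. unfold s. rewrite length_map, length_seq. reflexivity. tauto. }
  apply (side_finite p P g' (generated G s) L x0 (gen_sub s) HL); auto.
  - intros i Hi. destruct i as [|i].
    + unfold g'. rewrite gmulVr. apply (gen_sub s).
    + apply gen_in. unfold s. apply in_map. apply in_seq. lia.
  - apply norm_cover; auto.
Qed.

Theorem corollary4p2 (G : Group) (m : nat) (hG : ~ amenable G) :
  ((forall H, m_generated_subgroup G m H -> amenable_subgroup G H) ->
     forall t, is_tarski_number G t -> (m + 3 <= t)%nat) /\
  ((forall H, m_generated_subgroup G m H -> finite_set G H) ->
     forall t, is_tarski_number G t -> (2 * m + 4 <= t)%nat).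
Proof.
  split.
  - intros Hm t [[p [q [Hpq Et]]] _]. subst t.
    destruct Hpq as [Hp [Hq [P [Q [g [h [DP [DQ [DPQ [CP CQ]]]]]]]]]].
    destruct (le_lt_dec (m + 3) (p + q)) as [|Hlt]; auto. exfalso.
    set (g' := fun i => gmul G (g i) (ginv G (g 0%nat))).
    set (h' := fun i => gmul G (h i) (ginv G (h 0%nat))).
    set (s := map g' (seq 1 (p - 1)) ++ map h' (seq 1 (q - 1)) ++ repeat (gone G) (m + 2 - (p + q))).
    apply (amen_contra (generated G s) p q P Q g' h' (gen_sub s)); auto.
    + apply Hm. exists s. split; [|tauto]. unfold s.
      rewrite !length_app, !length_map, !length_seq, repeat_length. lia.
    + intros i Hi. destruct i as [|i].
      * unfold g'. rewrite gmulVr. apply (gen_sub s).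
      * apply gen_in. unfold s. apply in_or_app. left. apply in_map. apply in_seq. lia.
    + intros i Hi. destruct i as [|i].
      * unfold h'. rewrite gmulVr. apply (gen_sub s).
      * apply gen_in. unfold s. apply in_or_app. right. apply in_or_app. left.
        apply in_map. apply in_seq. lia.
    + apply norm_cover; auto.
    + apply norm_cover; auto.
  - intros Hm t [[p [q [Hpq Et]]] _]. subst t.
    destruct Hpq as [Hp [Hq [P [Q [g [h [DP [DQ [DPQ [CP CQ]]]]]]]]]].
    destruct (CQ (gone G)) as [j [Hj [x0 [Qx0 _]]]].
    destruct (CP (gone G)) as [i [Hi [y0 [Py0 _]]]].
    assert (A : (m + 2 <= p)%nat).
    { apply (side_bound m p P g x0 Hm DP CP). intros k Hk Pk. exact (DPQ k j x0 Hk Hj Pk Qx0). }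
    assert (B : (m + 2 <= q)%nat).
    { apply (side_bound m q Q h y0 Hm DQ CQ). intros k Hk Qk. exact (DPQ i k y0 Hi Hk Py0 Qk). }
    lia.
Qed.
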